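(* Let $q$ be a prime power, $m\ge1$, and $1\le k<n$ integers. Let $X\in \mathbb{F}_{q^m}^{k\times(n-k)}$ be chosen uniformly at random. Then $$\Pr\big(\mathrm{rs} [\,I_k \mid X\,] \text{ is an MRD code}\big) \geq 1-\sum_{r=0}^k r\binom{k}{k-r}_q\binom{n-k}{r}_q q^{r^2}q^{-m}.$$
   Context: $\binom{a}{b}_q$ is the Gaussian binomial coefficient, the number of $b$-dimensional subspaces of $\mathbb{F}_q^a$. Fix an $\mathbb{F}_q$-basis $b_1,\dots,b_m$ of $\mathbb{F}_{q^m}$; the rank of $v\in\mathbb{F}_{q^m}^n$ is the rank of the matrix $M\in\mathbb{F}_q^{m\times n}$ with $v_j=\sum_i M_{ij}b_i$, and the rank distance is $d_R(u,v)=\mathrm{rk}(u-v)$. A linear rank-metric code of dimension $k$ is a $k$-dimensional $\mathbb{F}_{q^m}$-subspace of $\mathbb{F}_{q^m}^n$; it is MRD if its minimum rank distance is $n-k+1$. $\mathrm{rs}$ denotes the $\mathbb{F}_{q^m}$-row space. *)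

(* Defs.v *)
From HB Require Import structures.
From mathcomp Require Import all_boot all_order all_algebra all_field.
Set Implicit Arguments. Unset Strict Implicit. Unset Printing Implicit Defensive.
Import GRing.Theory.
Local Open Scope ring_scope.

(* Gaussian binomial coefficient [a choose b]_q, via the standard product
   formula  prod_{i<b} (q^(a-i) - 1) / (q^(i+1) - 1)  (it is 0 when b > a,
   since then the factor for i = a vanishes). *)
Definition gauss_binom (q a b : nat) : rat :=
  \prod_(i < b) (((q ^ (a - i))%N%:R - 1) / ((q ^ i.+1)%N%:R - 1)).

Section RankMetric.
Variables (F : finFieldType) (L : fieldExtType F).
(* L = F_{q^m} as an F-vector space (F = F_q); finvect_type L is the same
   field equipped with its (canonical) finite-type structure. *)
Local Notation FL := (finvect_type L).

Definition rank_mx_of {N : nat} (v : 'rV[FL]_N) : 'M[F]_(\dim {:FL}, N) :=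
  \matrix_(i < \dim {:FL}, j < N) coord (vbasis {:FL}) i (v 0 j).

Definition rk {N : nat} (v : 'rV[FL]_N) : nat := \rank (rank_mx_of v).

Definition rank_dist {N : nat} (u v : 'rV[FL]_N) : nat := rk (u - v).

Definition min_rank_dist_is {k0 N : nat} (G : 'M[FL]_(k0, N)) (d : nat) : bool :=
  [exists u : 'rV[FL]_N, exists v : 'rV[FL]_N,
     [&& (u <= G)%MS, (v <= G)%MS, u != v & rank_dist u v == d]] &&
  [forall u : 'rV[FL]_N, forall v : 'rV[FL]_N,
     [&& (u <= G)%MS, (v <= G)%MS & u != v] ==> (d <= rank_dist u v)%N].

Definition is_MRD {k0 N : nat} (G : 'M[FL]_(k0, N)) : bool :=
  min_rank_dist_is G (N - \rank G + 1)%N.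

End RankMetric.

(* Main.v *)
Require Import Defs.
From HB Require Import structures.
From mathcomp Require Import all_boot all_order all_algebra all_field.
From mathcomp Require Import ring lra.
From mathcomp Require Import perm.
Import Order.TTheory GRing.Theory Num.Theory.
Local Open Scope ring_scope.
Lemma fact_sub (q a i : nat) : (0 < q)%N -> (q ^ a - q ^ i = q ^ i * (q ^ (a - i) - 1))%N.
Proof.
move=> q0; case: (leqP i a) => h.
  by rewrite mulnBr muln1 -expnD subnKC.
have/eqP->: (a - i == 0)%N by rewrite subn_eq0 ltnW.
rewrite expn0 subnn muln0; apply/eqP; rewrite subn_eq0.
by rewrite leq_pexp2l // ltnW.
Qed.

Definition fcount (q b a : nat) : nat := \prod_(i < b) (q ^ a - q ^ i).

Lemma fcount_rat (q b a : nat) : (0 < q)%N ->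
  (fcount q b a)%:R = (\prod_(i < b) (q ^ i)%:R) * \prod_(i < b) ((q ^ (a - i))%:R - 1) :> rat.
Proof.
move=> q0; rewrite /fcount natr_prod -big_split /=; apply: eq_bigr => i _.
rewrite fact_sub // natrM natrB ?expn_gt0 ?q0 //.
Qed.

Lemma gauss_ratio (q a b : nat) : (1 < q)%N ->
  (fcount q b a)%:R / (fcount q b b)%:R = gauss_binom q a b.
Proof.
move=> q1; have q0 : (0 < q)%N by apply: ltnW.
rewrite !fcount_rat // /gauss_binom prodf_div.
have nz : \prod_(i < b) (q ^ i)%:R != 0 :> rat.
  by rewrite prodf_seq_neq0; apply/allP => i _; rewrite /= pnatr_eq0 -lt0n expn_gt0 q0.
rewrite invfM mulrACA divff // mul1r; congr (_ / _).
rewrite (reindex_inj rev_ord_inj) /=; apply: eq_bigr => i _.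
by rewrite subKn.
Qed.

Lemma prod_bound (x : rat) (r j : nat) : 1 <= x -> (j <= r)%N ->
  0 <= \prod_(i < j) (x ^+ r - x ^+ i) <= x ^+ (r * j) /\
  x ^+ (r * j) - \prod_(i < j) (x ^+ r - x ^+ i) <= j%:R * x ^+ (r * j) / x.
Proof.
move=> x1; have x0 : 0 < x by apply: lt_le_trans x1.
elim: j => [|j IH] hj.
  by rewrite big_ord0 muln0 expr0 subrr mul0r lexx ler01.
have [/andP[P0 P1] P2] := IH (ltnW hj).
rewrite big_ord_recr /=.
set P := \prod_(i < j) _ in P0 P1 P2 *.
have hxj : x ^+ j <= x ^+ r by apply: ler_weXn2l => //; apply: ltnW.
have hxj' : x ^+ j.+1 <= x ^+ r by apply: ler_weXn2l.
have e : x ^+ (r * j.+1) = x ^+ (r * j) * x ^+ r by rewrite mulnS exprD mulrC.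
rewrite e; split.
  apply/andP; split; first by rewrite mulr_ge0 // subr_ge0.
  apply: ler_pM => //; [by rewrite subr_ge0| by rewrite lerBlDr lerDl exprn_ge0 // ltW].
have ex : x ^+ j.+1 = x ^+ j * x by rewrite exprSr.
have h1 : x ^+ (r * j) * x ^+ r - P * (x ^+ r - x ^+ j)
   = (x ^+ (r * j) - P) * x ^+ r + P * x ^+ j by ring.
rewrite h1.
have h2 : (x ^+ (r * j) - P) * x ^+ r <= j%:R * x ^+ (r * j) / x * x ^+ r.
  by rewrite ler_wpM2r // exprn_ge0 // ltW.
have h3 : P * x ^+ j <= x ^+ (r * j) * x ^+ r / x.
  rewrite ler_pdivlMr // -mulrA -exprSr.
  by apply: ler_pM => //; rewrite exprn_ge0 // ltW.
apply: le_trans (lerD h2 h3) _.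
by rewrite -mulr_natl -natr1 le_eqVlt; apply/orP; left; apply/eqP; field; rewrite gt_eqF.
Qed.
Lemma ff_gt0 (F : finFieldType) : (0 < #|F|)%N.
Proof. exact: ltnW (@finNzRing_gt1 F). Qed.


Lemma card_rowfree_pred (F : finFieldType) b a :
  #|[pred A : 'M[F]_(b, a) | \rank A == b]| = fcount #|F| b a.
Proof.
rewrite /fcount.
set p := #|F|; set n := a.
elim: b => [|m IHm].
  rewrite big_ord0 (@eq_card1 _ (0 : 'M_(0, n))) //= => A.
  by rewrite flatmx0 !inE mxrank.unlock !eqxx.
rewrite big_ord_recr /= -{}IHm.
pose fr m := [pred A : 'M[F]_(m, n) | \rank A == m].
rewrite -/(fr m) -/(fr m.+1).
rewrite -sum_nat_const /= -sum1_card -add1n.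
rewrite (partition_big dsubmx (fr m)) /= => [|A]; last first.
  rewrite !inE -{1}(vsubmxK A); move: {A}(_ A) (_ A) => Ad Au Afull.
  rewrite eqn_leq rank_leq_row -(leq_add2l (\rank Au)) -mxrank_sum_cap.
  rewrite {1 3}[@mxrank]lock addsmxE (eqnP Afull) -lock -addnA.
  by rewrite leq_add ?rank_leq_row ?leq_addr.
apply: eq_bigr => A rAm; rewrite (reindex (col_mx^~ A)) /=; last first.
  exists usubmx => [v _ | vA]; first by rewrite col_mxKu.
  by case/andP=> _ /eqP <-; rewrite vsubmxK.
transitivity #|~: [set v *m A | v in 'rV_m]|; last first.
  rewrite cardsCs setCK card_imset ?card_mx ?card_ord ?mul1n //.
  have [B AB1] := row_freeP rAm; apply: can_inj (mulmx^~ B) _ => v.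
  by rewrite -mulmxA AB1 mulmx1.
rewrite -sum1_card; apply: eq_bigl => v; rewrite !inE col_mxKd eqxx.
rewrite andbT eqn_leq rank_leq_row /= -(leq_add2r (\rank (v :&: A)%MS)).
rewrite -addsmxE mxrank_sum_cap (eqnP rAm) addnAC leq_add2r.
rewrite (ltn_leqif (mxrank_leqif_sup _)) ?capmxSl // sub_capmx submx_refl.
by congr (~~ _); apply/submxP/imsetP=> [] [u]; exists u.
Qed.

Lemma card_rowfree (F : finFieldType) b a :
  #|[set A : 'M[F]_(b, a) | \rank A == b]| = fcount #|F| b a.
Proof. by rewrite -card_rowfree_pred; apply: eq_card => A; rewrite !inE. Qed.

Lemma card_unitmx (F : finFieldType) r :
  #|[set Z : 'M[F]_r | Z \in unitmx]| = fcount #|F| r r.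
Proof.
rewrite -card_rowfree; apply: eq_card => Z; rewrite !inE -row_free_unit.
by [].
Qed.

Lemma sing_bound (F : finFieldType) r :
  (#|[set Z : 'M[F]_r | \det Z == 0]|%:R : rat)
    <= r%:R * (#|F| ^ (r * r))%:R / #|F|%:R.
Proof.
have e : #|[set Z : 'M[F]_r | \det Z == 0]| = (#|F| ^ (r * r) - fcount #|F| r r)%N.
  rewrite -card_unitmx -card_mx.
  rewrite -(cardsC [set Z : 'M[F]_r | Z \in unitmx]) addKn.
  apply: eq_card => Z; rewrite !inE unitmxE unitfE; by case: (\det Z == 0).
have Q1 : 1 <= (#|F|%:R : rat).
  by rewrite ler1n; apply: ltnW; apply: finNzRing_gt1.
have hf : (fcount #|F| r r)%:R = \prod_(i < r) ((#|F|%:R : rat) ^+ r - #|F|%:R ^+ i).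
  rewrite /fcount natr_prod; apply: eq_bigr => i _.
  rewrite natrB ?natrX //.
  by rewrite leq_pexp2l ?ff_gt0 // ltnW.
have [/andP[_ P1] P2] := @prod_bound _ r r Q1 (leqnn r).

rewrite e natrB; last first.
  by rewrite -(@ler_nat rat) hf natrX.
by rewrite hf natrX.
Qed.
Lemma card_bij_pred (T : finType) (f : T -> T) (P : pred T) :
  injective f -> #|[set x | P (f x)]| = #|[set x | P x]|.
Proof.
move=> inj; transitivity #|f @^-1: [set x | P x]|; last exact: card_preimset.
by apply: eq_card => x; rewrite !inE.
Qed.

Lemma card_dsub_pred (F : finFieldType) s r (P : pred 'M[F]_r) :
  #|[set W : 'M[F]_(s + r, r) | P (dsubmx W)]| =
  (#|F| ^ (s * r) * #|[set Z : 'M[F]_r | P Z]|)%N.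
Proof.
have -> : [set W : 'M[F]_(s + r, r) | P (dsubmx W)] =
   (fun p : 'M[F]_(s, r) * 'M[F]_r => col_mx p.1 p.2) @: setX setT [set Z | P Z].
  apply/setP => W; rewrite inE; apply/idP/imsetP.
    move=> hW; exists (usubmx W, dsubmx W); first by rewrite !inE hW.
    by rewrite /= vsubmxK.
  by case=> -[U V]; rewrite !inE /= => hV ->; rewrite col_mxKd.
rewrite card_imset; last first.
  by move=> [U V] [U' V'] /= /eq_col_mx [-> ->].
by rewrite cardsX cardsT card_mx.
Qed.

Lemma det_rowmx_count (F : finFieldType) s r (A : 'M[F]_(s + r, s)) :
  \rank A = s ->
  #|[set Z : 'M[F]_(s + r, r) | \det (row_mx A Z) == 0]| =
  (#|F| ^ (s * r) * #|[set W : 'M[F]_r | \det W == 0%R]|)%N.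
Proof.
move=> hA.
set L := col_ebase A; set U := row_ebase A.
have eA : A = L *m col_mx 1%:M 0 *m U.
  by have := mulmx_ebase A; rewrite hA pid_mx_col => ->.
have Lu : L \in unitmx := col_ebase_unit A.
have Uu : U \in unitmx := row_ebase_unit A.
have key : forall Z : 'M[F]_(s + r, r), \det (row_mx A Z) =
    \det L * \det (dsubmx (invmx L *m Z)) * \det U.
  move=> Z.
  have -> : row_mx A Z = L *m (row_mx (col_mx 1%:M 0) (invmx L *m Z)
                                   *m block_mx U 0 0 1%:M).
    rewrite mul_row_block !mulmx0 mulmx1 addr0 add0r mul_mx_row.
    by rewrite mulKVmx // mulmxA -eA.
  rewrite !det_mulmx det_ublock det1 mulr1.
  rewrite -[invmx L *m Z]vsubmxK -block_mxEh det_ublock det1 mul1r.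
  by rewrite col_mxKd mulrA.
transitivity #|[set Z | (fun W : 'M[F]_(s + r, r) => \det (dsubmx W) == 0) (invmx L *m Z)]|.
  apply: eq_card => Z; rewrite !inE key !mulf_eq0.
  move: Lu Uu; rewrite !unitmxE !unitfE => /negPf-> /negPf->.
  by rewrite orbF.
rewrite (@card_bij_pred _ (mulmx (invmx L)) (fun W : 'M[F]_(s + r, r) => \det (dsubmx W) == 0)); last first.
  by apply: can_inj (mulmx L) _ => Z; rewrite mulKVmx.
by rewrite (@card_dsub_pred F s r (fun W : 'M[F]_r => \det W == 0)).
Qed.

Lemma fiber_count (F : finFieldType) k t r (D : 'M[F]_(t, r)) (E : 'M[F]_(r, t))
    (P : pred 'M[F]_(k, r)) : E *m D = 1%:M ->
  (#|[set X : 'M[F]_(k, t) | P (X *m D)]| * #|F| ^ (k * r) =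
   #|[set Y | P Y]| * #|F| ^ (k * t))%N.
Proof.
move=> ED.
set c := #|[set X : 'M[F]_(k, t) | X *m D == 0]|.
have fib : forall Y : 'M[F]_(k, r),
    (\sum_(X : 'M[F]_(k, t) | X *m D == Y) 1 = c)%N.
  move=> Y; rewrite sum1_card.
  have -> : #|[pred X : 'M[F]_(k, t) | X *m D == Y]| =
            #|[set X | (fun X : 'M[F]_(k, t) => X *m D == 0) (X - Y *m E)]|.
    apply: eq_card => X; rewrite !inE mulmxBl -mulmxA ED mulmx1 subr_eq0.
    by [].
  rewrite (@card_bij_pred _ (fun X => X - Y *m E) (fun X : 'M[F]_(k, t) => X *m D == 0)) //.
  exact: addIr.
have tot : (#|F| ^ (k * t) = #|F| ^ (k * r) * c)%N.
  rewrite -card_mx -sum1_card (partition_big (fun X => X *m D) predT) //=.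
  rewrite (eq_bigr (fun _ => c)); last by move=> Y _; rewrite fib.
  by rewrite sum_nat_const card_mx.
have hP : #|[set X : 'M[F]_(k, t) | P (X *m D)]| = (#|[set Y | P Y]| * c)%N.
  rewrite -sum1_card (partition_big (fun X => X *m D) P) /=; last first.
    by move=> X; rewrite inE.
  rewrite (eq_bigr (fun _ => c)); last first.
    move=> Y PY; rewrite -(fib Y); apply: eq_bigl => X; rewrite inE.
    by case: (X *m D =P Y) => [->|]; rewrite ?PY ?andbF.
  rewrite -sum_nat_const; apply: eq_bigl => Y; by rewrite inE.
by rewrite hP tot -mulnA [(c * _)%N]mulnC.
Qed.

Section Main.
Variables (F : finFieldType) (L : fieldExtType F).
Local Notation K := (finvect_type L).
Local Notation inj := (in_alg K).

Definition Bt s r t (A : 'M[F]_(s, s + r)) (C : 'M[F]_(r, s + r)) (D : 'M[F]_(r, t))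
  : 'M[F]_(s + r, (s + r) + t) := col_mx (row_mx A 0) (row_mx C D).

Lemma Bt_eval s r t A C D (X : 'M[K]_(s + r, t)) :
  row_mx 1%:M X *m (map_mx inj (@Bt s r t A C D))^T =
  row_mx (map_mx inj A)^T ((map_mx inj C)^T + X *m (map_mx inj D)^T).
Proof.
rewrite /Bt map_col_mx !map_row_mx map_mx0 tr_col_mx !tr_row_mx trmx0.
by rewrite mul_mx_row !mul_row_col mulmx0 addr0 !mul1mx.
Qed.

Lemma perB s r t A C D : row_free A -> row_free D ->
  (#|[set X : 'M[K]_(s + r, t) |
      \det (row_mx 1%:M X *m (map_mx inj (@Bt s r t A C D))^T) == 0]|%:R : rat)
  <= r%:R * (#|K| ^ ((s + r) * t))%:R / #|K|%:R.
Proof.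
move=> fA fD.
set A' := (map_mx inj A)^T; set C' := (map_mx inj C)^T; set D' := (map_mx inj D)^T.
have rA' : \rank A' = s by rewrite mxrank_tr mxrank_map (eqP fA).
have [B DB] : exists B, map_mx inj D *m B = 1%:M.
  by apply/row_freeP; rewrite /row_free mxrank_map.
have ED : B^T *m D' = 1%:M by rewrite -trmx_mul DB trmx1.
pose P := fun Y : 'M[K]_(s + r, r) => \det (row_mx A' (C' + Y)) == 0.
have e1 : #|[set X : 'M[K]_(s + r, t) |
      \det (row_mx 1%:M X *m (map_mx inj (@Bt s r t A C D))^T) == 0]|
    = #|[set X : 'M[K]_(s + r, t) | P (X *m D')]|.
  by apply: eq_card => X; rewrite !inE Bt_eval.
have hf := @fiber_count _ _ _ _ D' _ P ED.
have e2 : #|[set Y | P Y]| = #|[set Z : 'M[K]_(s + r, r) | \det (row_mx A' Z) == 0]|.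
  rewrite (@card_bij_pred _ (fun Y => C' + Y) (fun Z : 'M[K]_(s + r, r) => \det (row_mx A' Z) == 0)) //.
  exact: addrI.
rewrite e2 det_rowmx_count // in hf.
have Q0 : 0 < (#|K|%:R : rat) by rewrite ltr0n ff_gt0.
have hs := sing_bound K r.
set S := #|[set W : 'M[K]_r | \det W == 0]| in hf hs.
rewrite e1.
set N := #|[set X | P (X *m D')]| in hf *.
have hf' : (N%:R : rat) * (#|K|%:R) ^+ ((s + r) * r) =
   (#|K|%:R) ^+ (s * r) * S%:R * (#|K|%:R) ^+ ((s + r) * t).
  by have := congr1 (fun n : nat => (n%:R : rat)) hf; rewrite /= !natrM !natrX.
rewrite natrX.
have hpos : 0 < (#|K|%:R : rat) ^+ ((s + r) * r) by rewrite exprn_gt0.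
rewrite -(ler_pM2r hpos) hf'.
rewrite [X in _ <= _ * X](_ : _ = #|K|%:R ^+ (s * r) * #|K|%:R ^+ (r * r)); last first.
  by rewrite -exprD mulnDl.
have -> : r%:R * #|K|%:R ^+ ((s + r) * t) / #|K|%:R *
   (#|K|%:R ^+ (s * r) * #|K|%:R ^+ (r * r))
   = #|K|%:R ^+ (s * r) * (r%:R * #|K|%:R ^+ (r * r) / #|K|%:R) * #|K|%:R ^+ ((s + r) * t)
   :> rat by ring.
apply: ler_wpM2r; first by rewrite exprn_ge0 // ltW.
apply: ler_wpM2l; first by rewrite exprn_ge0 // ltW.
by rewrite -natrX.
Qed.


Section Grp.
Variables (s r t : nat).

Definition Trip : {set ('M[F]_(s, s + r) * 'M[F]_(r, s + r)) * 'M[F]_(r, t)} :=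
  setX (setX [set A : 'M[F]_(s, s + r) | row_free A] setT)
       [set D : 'M[F]_(r, t) | row_free D].

Definition EX (X : 'M[K]_(s + r, t)) (T : ('M[F]_(s, s + r) * 'M[F]_(r, s + r)) * 'M[F]_(r, t)) :=
  \det (row_mx 1%:M X *m (map_mx inj (@Bt s r t T.1.1 T.1.2 T.2))^T) == 0.

Definition BadR := [set X : 'M[K]_(s + r, t) | [exists T in Trip, EX X T]].

Definition Grp : {set ('M[F]_s * 'M[F]_(r, s)) * 'M[F]_r} :=
  setX (setX [set P : 'M[F]_s | P \in unitmx] setT) [set S : 'M[F]_r | S \in unitmx].

Definition act (g : ('M[F]_s * 'M[F]_(r, s)) * 'M[F]_r)
  (T : ('M[F]_(s, s + r) * 'M[F]_(r, s + r)) * 'M[F]_(r, t)) :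
  ('M[F]_(s, s + r) * 'M[F]_(r, s + r)) * 'M[F]_(r, t) :=
  ((g.1.1 *m T.1.1, g.1.2 *m T.1.1 + g.2 *m T.1.2), g.2 *m T.2).

Lemma Bt_act g T : @Bt s r t (act g T).1.1 (act g T).1.2 (act g T).2 =
  block_mx g.1.1 0 g.1.2 g.2 *m @Bt s r t T.1.1 T.1.2 T.2.
Proof.
rewrite /Bt /act /= -!block_mxEv mulmx_block.
by rewrite !mulmx0 !mul0mx addr0 !add0r.
Qed.

Lemma EX_act X g T : g \in Grp -> EX X (act g T) = EX X T.
Proof.
rewrite !inE => /andP[/andP[Pu _] Su].
rewrite /EX Bt_act map_mxM trmx_mul mulmxA det_mulmx det_tr det_map_mx.
rewrite det_lblock mulf_eq0 fmorph_eq0 mulf_eq0.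
move: Pu Su; rewrite !unitmxE !unitfE => /negPf-> /negPf->.
by rewrite !orbF.
Qed.

Lemma act_in g T : g \in Grp -> T \in Trip -> act g T \in Trip.
Proof.
rewrite !inE => /andP[/andP[Pu _] Su] /andP[/andP[fA _] fD] /=.
rewrite /row_free !eqmxMfull ?row_full_unit //.
by move: fA fD; rewrite /row_free => -> ->.
Qed.

Lemma act_inj T : T \in Trip -> {in Grp &, injective (act^~ T)}.
Proof.
rewrite !inE => /andP[/andP[fA _] fD].
move=> [[P R] S] [[P' R'] S'] _ _ [e1 e2 e3].
have eP := row_free_inj fA e1.
have eS := row_free_inj fD e3.
rewrite eS in e2; have eR := row_free_inj fA (addIr _ e2).
by rewrite eP eR eS.
Qed.

Lemma badR_count :
  (#|BadR| * #|Grp| <= \sum_(T in Trip) #|[set X | EX X T]|)%N.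
Proof.
have e : (\sum_(T in Trip) #|[set X | EX X T]| =
          \sum_X #|[set T in Trip | EX X T]|)%N.
  rewrite (eq_bigr (fun T => \sum_(X | EX X T) 1)%N); last first.
    by move=> T _; rewrite sum1_card; apply: eq_card => X; rewrite inE.
  rewrite (exchange_big_dep xpredT) //=.
  apply: eq_bigr => X _; rewrite -sum1_card; apply: eq_bigl => T.
  by rewrite !inE.
rewrite e (bigID (fun X => X \in BadR)) /= -sum_nat_const.
apply: leq_trans (leq_addr _ _); apply: leq_sum => X.
rewrite inE => /existsP[T0 /andP[T0in hT0]].
rewrite -(card_in_imset (@act_inj T0 T0in)); apply: subset_leq_card.
apply/subsetP => T /imsetP[g gin ->]; rewrite inE act_in //=.
by rewrite EX_act.
Qed.


Lemma badR_bound :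
  (#|BadR|%:R : rat) * #|Grp|%:R <=
    #|Trip|%:R * (r%:R * (#|K| ^ ((s + r) * t))%:R / #|K|%:R).
Proof.
rewrite -natrM; apply: le_trans (_ : (\sum_(T in Trip) #|[set X | EX X T]|)%:R <= _).
  by rewrite ler_nat badR_count.
rewrite natr_sum mulr_natl -sumr_const; apply: ler_sum => T.
rewrite !inE => /andP[/andP[fA _] fD].
exact: perB.
Qed.

Lemma card_Trip : #|Trip| = (fcount #|F| s (s + r) * #|F| ^ (r * (s + r)) * fcount #|F| r t)%N.
Proof.
rewrite /Trip !cardsX cardsT card_mx -!card_rowfree.
by congr (_ * _ * _)%N; apply: eq_card => A; rewrite !inE.
Qed.

Lemma card_Grp : #|Grp| = (fcount #|F| s s * #|F| ^ (r * s) * fcount #|F| r r)%N.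
Proof. by rewrite /Grp !cardsX cardsT card_mx -!card_unitmx. Qed.

Lemma badR_final :
  (#|BadR|%:R : rat) <= gauss_binom #|F| (s + r) s * gauss_binom #|F| t r
     * (#|F| ^ (r * r))%:R * (r%:R * (#|K| ^ ((s + r) * t))%:R / #|K|%:R).
Proof.
have q1 : (1 < #|F|)%N by apply: finNzRing_gt1.
have gpos : (0 : rat) < #|Grp|%:R.
  rewrite ltr0n; apply/card_gt0P; exists ((1%:M, 0), 1%:M).
  by rewrite !inE !unitmx1.
have h := badR_bound.
rewrite -(ler_pdivlMr _ _ gpos) in h.
apply: (le_trans h); rewrite mulrAC; apply: ler_wpM2r.
  by rewrite divr_ge0 ?mulr_ge0 ?ler0n.
rewrite card_Trip card_Grp -(gauss_ratio #|F| (s + r) s q1) -(gauss_ratio #|F| t r q1) !natrM.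
have f0 : forall b, (0 : rat) < (fcount #|F| b b)%:R.
  move=> b; rewrite ltr0n /fcount; apply/prodn_gt0 => i.
  by rewrite subn_gt0 (ltn_exp2l _ _ q1).
have hq : (#|F| ^ (r * (s + r)))%:R = (#|F| ^ (r * s))%:R * (#|F| ^ (r * r))%:R :> rat.
  by rewrite -natrM -expnD mulnDr.
rewrite hq.
have q0 : (0 : rat) < (#|F| ^ (r * s))%:R by rewrite ltr0n expn_gt0 ff_gt0.
have f1 := f0 s; have f2 := f0 r.
rewrite le_eqVlt; apply/orP; left; apply/eqP; field.
by rewrite !gt_eqF.
Qed.

End Grp.


Definition BadK k t := [set X : 'M[K]_(k, t) | [exists B : 'M[F]_(k, k + t),
  row_free B && (\det (row_mx 1%:M X *m (map_mx inj B)^T) == 0)]].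

Definition BadKr k t r := [set X : 'M[K]_(k, t) | [exists B : 'M[F]_(k, k + t),
  [&& row_free B, \rank (rsubmx B) == r & \det (row_mx 1%:M X *m (map_mx inj B)^T) == 0]]].

Lemma ursubmx_usub m1 m2 n1 n2 (M : 'M[F]_(m1 + m2, n1 + n2)) :
  ursubmx M = usubmx (rsubmx M).
Proof. by apply/matrixP => i j; rewrite !mxE. Qed.

Lemma rank_col_le m1 m2 n (U : 'M[F]_(m1, n)) (V : 'M[F]_(m2, n)) :
  (\rank (col_mx U V) <= \rank U + \rank V)%N.
Proof. by rewrite -addsmxE; apply: (mxrank_adds_leqif U V).1. Qed.

Lemma normal_form s r t (X : 'M[K]_(s + r, t)) :
  X \in BadKr (s + r) t r -> X \in BadR s r t.
Proof.
rewrite !inE => /existsP[B0 /and3P[fB0 rB0 dB0]].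
set B2 := rsubmx B0.
set Lc := col_ebase B2; set Uc := row_ebase B2.
have eB2 : B2 = Lc *m pid_mx r *m Uc.
  by have := mulmx_ebase B2; rewrite (eqP rB0) => ->.
pose sg := perm (@rev_ord_inj (s + r)).
set g := perm_mx sg *m invmx Lc.
have gu : g \in unitmx by rewrite unitmx_mul unitmx_perm unitmx_inv col_ebase_unit.
set B1 := g *m B0.
have rB1 : rsubmx B1 = row_perm sg (pid_mx r *m Uc).
  rewrite /B1 -[B0]hsubmxK mul_mx_row row_mxKr -/B2 eB2 row_permE /g.
  by rewrite -!mulmxA mulKmx ?col_ebase_unit.
have U0 : ursubmx B1 = 0.
  rewrite ursubmx_usub rB1; apply/matrixP => i j; rewrite !mxE big1 // => l _.
  rewrite !mxE permE /=.
  have -> : ((s + r - (i : nat).+1) < r)%N = false.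
    apply/negbTE; rewrite -leqNgt leq_subRL; last by rewrite ltn_addr.
    by rewrite leq_add2r.
  by rewrite andbF mul0r.
set A := ulsubmx B1; set C := dlsubmx B1; set D := drsubmx B1.
have eB1 : B1 = @Bt s r t A C D.
  by rewrite /Bt -block_mxEv -U0 submxK.
have rD : row_free D.
  have : \rank (rsubmx B1) = r.
    rewrite /B1 -[B0]hsubmxK mul_mx_row row_mxKr -/B2.
    by rewrite eqmxMfull ?row_full_unit // (eqP rB0).
  rewrite eB1 /Bt -block_mxEv block_mxEh row_mxKr -addsmxE adds0mx.
  by rewrite /row_free => ->.
have rA : row_free A.
  have rB1' : \rank B1 = (s + r)%N by rewrite /B1 eqmxMfull ?row_full_unit // (eqP fB0).
  have h1 : \rank (row_mx A (0 : 'M[F]_(s, t))) = \rank A.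
    have -> : row_mx A (0 : 'M[F]_(s, t)) = A *m row_mx 1%:M 0.
      by rewrite mul_mx_row mulmx1 mulmx0.
    by rewrite mxrankMfree // /row_free -pid_mx_row rank_pid_mx ?leq_addr.
  have := @rank_col_le _ _ _ (row_mx A (0 : 'M[F]_(s, t))) (row_mx C D).
  rewrite -/(@Bt s r t A C D) -eB1 rB1' h1 => h.
  have h2 := rank_leq_row (row_mx C D).
  have h3 := rank_leq_row A.
  rewrite /row_free eqn_leq h3 /=.
  rewrite -(leq_add2r r); apply: leq_trans h _; by rewrite leq_add2l.
apply/existsP; exists ((A, C), D); rewrite !inE rA rD /=.
rewrite /EX /= -eB1 /B1 map_mxM trmx_mul mulmxA det_mulmx (eqP dB0).
by rewrite mul0r.
Qed.


Lemma BadKr_bound k t r : (r <= k)%N ->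
  (#|BadKr k t r|%:R : rat) <= gauss_binom #|F| k (k - r) * gauss_binom #|F| t r
     * (#|F| ^ (r * r))%:R * (r%:R * (#|K| ^ (k * t))%:R / #|K|%:R).
Proof.
move=> hrk; have [s ek] : exists s, k = (s + r)%N by exists (k - r)%N; rewrite subnK.
subst k; rewrite addnK.
apply: le_trans (badR_final s r t).
rewrite ler_nat; apply: subset_leq_card; apply/subsetP => X.
exact: normal_form.
Qed.

Lemma card_bigcup_le (T : finType) n (A : nat -> {set T}) :
  (#|\bigcup_(r < n) A r| <= \sum_(r < n) #|A r|)%N.
Proof.
elim: n => [|n IH]; first by rewrite !big_ord0 cards0.
rewrite !big_ord_recr /= cardsU; apply: leq_trans (leq_subr _ _) _.
by rewrite leq_add2r.
Qed.

Lemma BadK_bound k t :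
  (#|BadK k t|%:R : rat) <= \sum_(r < k.+1) (gauss_binom #|F| k (k - r) * gauss_binom #|F| t r
     * (#|F| ^ (r * r))%:R * (r%:R * (#|K| ^ (k * t))%:R / #|K|%:R)).
Proof.
apply: le_trans (_ : (\sum_(r < k.+1) #|BadKr k t r|)%:R <= _).
  rewrite ler_nat; apply: leq_trans (card_bigcup_le _ k.+1 (fun r => BadKr k t r)).
  apply: subset_leq_card; apply/subsetP => X; rewrite inE => /existsP[B /andP[fB dB]].
  have hr : (\rank (rsubmx B) < k.+1)%N by rewrite ltnS rank_leq_row.
  apply/bigcupP; exists (Ordinal hr) => //.
  by rewrite inE; apply/existsP; exists B; rewrite fB eqxx dB.
rewrite natr_sum; apply: ler_sum => r _; apply: BadKr_bound.
by rewrite -ltnS.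
Qed.


Lemma kernel_lemma N k (w : 'rV[K]_N) : (\rank (rank_mx_of w) + k <= N)%N ->
  exists B : 'M[F]_(k, N), row_free B /\ w *m (map_mx inj B)^T = 0.
Proof.
move=> hr.
set M := rank_mx_of w.
set Km := kermx M^T.
have rK : (k <= \rank Km)%N.
  rewrite mxrank_ker mxrank_tr leq_subRL; first exact: hr.
  exact: rank_leq_col.
exists ((pid_mx k : 'M[F]_(k, \rank Km)) *m row_base Km); split.
  rewrite /row_free mxrankMfree; last exact: row_base_free.
  by rewrite rank_pid_mx.
have BM : (pid_mx k : 'M[F]_(k, \rank Km)) *m row_base Km *m M^T = 0.
  apply/sub_kermxP; apply: submx_trans (submxMl _ _) _.
  by rewrite eq_row_base.
set B := _ *m row_base Km in BM *.
apply/matrixP => i l; rewrite !mxE.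
have -> : \sum_j w i j * (map_mx inj B)^T j l =
   \sum_j \sum_(a < \dim {:K}) (B l j * coord (vbasis {:K}) a (w i j)) *: (vbasis {:K})`_a.
  apply: eq_bigr => j _; rewrite !mxE mulr_algr.
  rewrite {1}(coord_vbasis (memvf (w i j))) scaler_sumr; apply: eq_bigr => a _.
  by rewrite scalerA.
rewrite exchange_big /=.
apply: big1 => a _.
rewrite -scaler_suml.
have -> : \sum_j B l j * coord (vbasis {:K}) a (w i j) = (B *m M^T) l a.
  rewrite mxE; apply: eq_bigr => j _; rewrite !mxE.
  by rewrite (ord1 i).
by rewrite BM mxE scale0r.
Qed.

Lemma rank_row_le m n1 n2 (P : 'M[F]_(m, n1)) (Q : 'M[F]_(m, n2)) :
  (\rank (row_mx P Q) <= \rank P + \rank Q)%N.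
Proof. by rewrite -mxrank_tr tr_row_mx -(mxrank_tr P) -(mxrank_tr Q) rank_col_le. Qed.

Lemma rank_mx_of_row n1 n2 (a : 'rV[K]_n1) (b : 'rV[K]_n2) :
  rank_mx_of (row_mx a b) = row_mx (rank_mx_of a) (rank_mx_of b).
Proof.
apply/matrixP => i j; rewrite -(splitK j); case: (split j) => j' /=.
  by rewrite mxE row_mxEl row_mxEl mxE.
by rewrite mxE row_mxEr row_mxEr mxE.
Qed.

Lemma rank_delta k (i0 : 'I_k) :
  (\rank (rank_mx_of (delta_mx ord0 i0 : 'rV[K]_k)) <= 1)%N.
Proof.
have -> : rank_mx_of (delta_mx ord0 i0 : 'rV[K]_k) =
   (\col_i coord (vbasis {:K}) i 1) *m delta_mx 0 i0.
  apply/matrixP => i j; rewrite !mxE big_ord1 !mxE.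
  case: (j == i0); rewrite ?mulr1 ?mulr0 //.
  by rewrite linear0.
by apply: leq_trans (mxrankM_maxl _ _) _; apply: rank_leq_col.
Qed.

Lemma MRD_good k t (X : 'M[K]_(k, t)) : (0 < k)%N -> X \notin BadK k t ->
  is_MRD (row_mx 1%:M X).
Proof.
move=> k0 Xg.
set G := row_mx 1%:M X.
have GI : G *m col_mx 1%:M 0 = 1%:M by rewrite mul_row_col mulmx1 mulmx0 addr0.
have rG : \rank G = k.
  apply/eqP; rewrite eqn_leq rank_leq_row /=.
  by rewrite -{1}(mxrank1 K k) -GI mxrankM_maxl.
rewrite /is_MRD rG addKn.
have low : forall w : 'rV[K]_(k + t), (w <= G)%MS -> w != 0 -> (t + 1 <= rk w)%N.
  move=> w wG wn0; rewrite leqNgt; apply/negP => hlt.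
  have hr : (\rank (rank_mx_of w) + k <= k + t)%N.
    by move: hlt; rewrite /rk (addnC (\rank _) k) leq_add2l addn1 ltnS.
  have [B [fB wB]] := kernel_lemma _ _ _ hr.
  case/submxP: wG => x ex.
  move/negP: Xg; apply; rewrite inE; apply/existsP; exists B; rewrite fB /=.
  apply/negPn/negP => hd.
  have hu : G *m (map_mx inj B)^T \in unitmx by rewrite unitmxE unitfE.
  move: wB; rewrite ex -mulmxA => /(congr1 (mulmx^~ (invmx (G *m (map_mx inj B)^T)))).
  rewrite mulmxK // mul0mx => x0.
  by move: wn0; rewrite ex x0 mul0mx eqxx.
apply/andP; split.
  set i0 : 'I_k := Ordinal k0.
  apply/existsP; exists ((delta_mx 0 i0 : 'rV[K]_k) *m G); apply/existsP; exists 0.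
  have un0 : (delta_mx 0 i0 : 'rV[K]_k) *m G != 0.
    apply/eqP => h.
    have := congr1 (mulmx^~ (col_mx 1%:M 0)) h.
    rewrite -mulmxA GI mulmx1 mul0mx => /matrixP /(_ 0 i0).
    by rewrite !mxE !eqxx /= => /eqP; rewrite oner_eq0.
  rewrite submxMl sub0mx un0 /= /rank_dist subr0.
  rewrite eqn_leq low ?submxMl // andbT.
  rewrite /rk /G mul_mx_row mulmx1 rank_mx_of_row.
  apply: leq_trans (rank_row_le _ _ _ _ _) _.
  by rewrite (addnC t 1) leq_add ?rank_delta ?rank_leq_col.
apply/forallP => u; apply/forallP => v; apply/implyP => /and3P[uG vG uv].
rewrite /rank_dist low //.
  by rewrite addmx_sub // eqmx_opp.
by rewrite subr_eq0.
Qed.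

End Main.


Lemma cardK (F : finFieldType) (L : fieldExtType F) :
  #|finvect_type L| = (#|F| ^ \dim {:finvect_type L})%N.
Proof. rewrite -(@card_vspacef F (finvect_type L) (Vector.class (finvect_type L))). by rewrite card_vspace. Qed.

Theorem theorem4p6 (q m k n : nat) (F : finFieldType) (L : fieldExtType F)
  (hq : #|F| = q) (hm : \dim {:finvect_type L} = m) (hm1 : (1 <= m)%N)
  (hk1 : (1 <= k)%N) (hkn : (k < n)%N) :
  1 - \sum_(r < k.+1)
        (r%:R * gauss_binom q k (k - r) * gauss_binom q (n - k) r
         * (q ^ (r ^ 2))%N%:R / (q ^ m)%N%:R)
  <= (#|[set X : 'M[finvect_type L]_(k, n - k)
          | is_MRD (row_mx (1%:M : 'M[finvect_type L]_k) X)]|%:R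
      / #|{: 'M[finvect_type L]_(k, n - k)}|%:R : rat).
Proof.
set t := (n - k)%N.
have cK : #|finvect_type L| = (q ^ m)%N by rewrite cardK hq hm.
have Tpos : (0 : rat) < #|{: 'M[finvect_type L]_(k, t)}|%:R.
  by rewrite card_mx ltr0n expn_gt0 ff_gt0.
have Qpos : (0 : rat) < (q ^ m)%N%:R by rewrite -cK ltr0n ff_gt0.
set T := #|{: 'M[finvect_type L]_(k, t)}|.
set Bad := @BadK F L k t.
have hM : (T - #|Bad| <= #|[set X : 'M[finvect_type L]_(k, t)
          | is_MRD (row_mx (1%:M : 'M[finvect_type L]_k) X)]|)%N.
  rewrite /T -(cardsC Bad) addKn; apply: subset_leq_card; apply/subsetP => X.
  move=> XB; rewrite inE; apply: (@MRD_good F L k t X hk1); by rewrite -in_setC.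
have hB := @BadK_bound F L k t.
rewrite -/Bad hq cK in hB.
have key : (#|Bad|%:R / T%:R : rat) <= \sum_(r < k.+1)
        (r%:R * gauss_binom q k (k - r) * gauss_binom q t r
         * (q ^ (r ^ 2))%N%:R / (q ^ m)%N%:R).
  rewrite ler_pdivrMr //; apply: le_trans hB _.
  rewrite mulr_suml; apply: ler_sum => r _.
  have -> : (r ^ 2)%N = (r * r)%N by rewrite mulnn.
  rewrite /T card_mx cK.
  rewrite le_eqVlt; apply/orP; left; apply/eqP; field.
  by rewrite gt_eqF.
apply: le_trans (_ : 1 - #|Bad|%:R / T%:R <= _).
  by rewrite lerD2l lerN2.
have hT : (#|Bad| <= T)%N by apply: max_card.
have e : 1 - #|Bad|%:R / T%:R = (T - #|Bad|)%N%:R / T%:R :> rat.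
  by rewrite natrB // mulrBl divff ?gt_eqF.
rewrite e; apply: ler_wpM2r; first by rewrite invr_ge0 ltW.
by rewrite ler_nat.
Qed.
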